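(* Let $\mathcal{G}=(G,\odot,\leq)$ be a real continuous Alo-group with $G$ an open interval of $\mathbb{R}$ and identity $e$. The function $d_{[\mathcal{G}]}:[G]\times[G]\to G$, $$d_{[\mathcal{G}]}(\tilde a,\tilde b)=\max\{\|a^-\div b^-\|_{\mathcal{G}},\ \|a^+\div b^+\|_{\mathcal{G}}\}$$ (the $[\mathcal{G}]$-norm of the pair $[a^-\div b^-,a^+\div b^+]$), is a $[\mathcal{G}]$-distance, i.e. for all $\tilde a,\tilde b,\tilde c\in[G]$: (1) $d_{[\mathcal{G}]}(\tilde a,\tilde b)\geq e$; (2) $d_{[\mathcal{G}]}(\tilde a,\tilde b)=e\iff\tilde a=\tilde b$; (3) $d_{[\mathcal{G}]}(\tilde a,\tilde b)=d_{[\mathcal{G}]}(\tilde b,\tilde a)$; (4) $d_{[\mathcal{G}]}(\tilde a,\tilde b)\leq d_{[\mathcal{G}]}(\tilde a,\tilde c)\odot d_{[\mathcal{G}]}(\tilde c,\tilde b)$.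
   Context: An Alo-group $(G,\odot,\leq)$ is an Abelian group with a weak order $\leq$ such that $a\leq b\Rightarrow a\odot c\leq b\odot c$; real means $G\subseteq\mathbb{R}$ with the usual order, continuous means $\odot$ is continuous. $a^{(-1)}$ is the inverse of $a$, $a\div b=a\odot b^{(-1)}$, and $\|a\|_{\mathcal{G}}=\max\{a,a^{(-1)}\}$. $[G]=\{[a^-,a^+]: a^-,a^+\in G,\ a^-\leq a^+\}$, with $\tilde a=[a^-,a^+]$ etc.; two intervals are equal iff both endpoints coincide. *)

(* Defs.v *)
From HB Require Import structures.
From mathcomp Require Import all_boot all_order all_algebra.
From mathcomp Require Import all_classical all_reals all_analysis.
Set Implicit Arguments. Unset Strict Implicit. Unset Printing Implicit Defensive.
Import Order.TTheory GRing.Theory Num.Theory.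
Import numFieldNormedType.Exports.
Local Open Scope classical_set_scope.
Local Open Scope ring_scope.

Section AloGroup.
Variable R : realType.

Definition real_alo_group (G : set R) (op : R -> R -> R) (e : R) (inv : R -> R) : Prop :=
  (forall a b, G a -> G b -> G (op a b)) /\
      G e /\
      (forall a, G a -> G (inv a)) /\
      (forall a b c, G a -> G b -> G c -> op (op a b) c = op a (op b c)) /\
      (forall a b, G a -> G b -> op a b = op b a) /\
      (forall a, G a -> op a e = a) /\
      (forall a, G a -> op a (inv a) = e) /\
      (forall a b c, G a -> G b -> G c -> a <= b -> op a c <= op b c).

Definition continuous_op (G : set R) (op : R -> R -> R) : Prop :=
  forall p : R * R, G p.1 -> G p.2 ->
    (fun q : R * R => op q.1 q.2) @ within [set q : R * R | G q.1 /\ G q.2] (nbhs p)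
      --> op p.1 p.2.

Definition open_interval (G : set R) : Prop := open G /\ is_interval G.

Definition alo_div (op : R -> R -> R) (inv : R -> R) (a b : R) : R := op a (inv b).
Definition alo_norm (inv : R -> R) (a : R) : R := Num.max a (inv a).

(* [G]: pairs (a^-, a^+) of elements of G with a^- <= a^+ *)
Definition interval_G (G : set R) (x : R * R) : Prop := G x.1 /\ G x.2 /\ x.1 <= x.2.

Definition dist_IG (op : R -> R -> R) (inv : R -> R) (a b : R * R) : R :=
  Num.max (alo_norm inv (alo_div op inv a.1 b.1)) (alo_norm inv (alo_div op inv a.2 b.2)).

End AloGroup.

(* Main.v *)
Require Import Defs.
From HB Require Import structures.
From mathcomp Require Import all_boot all_order all_algebra.
From mathcomp Require Import all_classical all_reals all_analysis.
Import Order.TTheory GRing.Theory Num.Theory.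
Import numFieldNormedType.Exports.
Local Open Scope ring_scope.
Set Implicit Arguments. Unset Strict Implicit.

Section S.
Variables (R : realType) (G : set R) (op : R -> R -> R) (e : R) (inv : R -> R).
Hypothesis H : real_alo_group G op e inv.

Let Gop : forall {a b}, G a -> G b -> G (op a b). Proof. by case: H. Qed.
Let Ge : G e. Proof. by case: H => _ []. Qed.
Let Ginv : forall {a}, G a -> G (inv a). Proof. by case: H => _ [_ []]. Qed.
Let opA : forall {a b c}, G a -> G b -> G c -> op (op a b) c = op a (op b c).
Proof. by case: H => _ [_ [_ []]]. Qed.
Let opC : forall {a b}, G a -> G b -> op a b = op b a.
Proof. by case: H => _ [_ [_ [_ []]]]. Qed.
Let op0 : forall {a}, G a -> op a e = a.
Proof. by case: H => _ [_ [_ [_ [_ []]]]]. Qed.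
Let opV : forall {a}, G a -> op a (inv a) = e.
Proof. by case: H => _ [_ [_ [_ [_ [_ []]]]]]. Qed.
Let opmon : forall {a b c}, G a -> G b -> G c -> a <= b -> op a c <= op b c.
Proof. by case: H => _ [_ [_ [_ [_ [_ []]]]]]. Qed.

Lemma op0l a : G a -> op e a = a.
Proof. by move=> Ga; rewrite opC // op0. Qed.

Lemma inv_uniq x y : G x -> G y -> op x y = e -> y = inv x.
Proof.
move=> Gx Gy h.
have Gi := Ginv Gx.
transitivity (op y (op x (inv x))); first by rewrite opV // op0.
by rewrite -opA // [op y x]opC // h op0l.
Qed.

Lemma invK x : G x -> inv (inv x) = x.
Proof. move=> Gx; have Gi := Ginv Gx; symmetry; apply: inv_uniq => //; by rewrite opC // opV. Qed.

Lemma inve : inv e = e.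
Proof. symmetry; apply: inv_uniq => //; exact: op0. Qed.

Lemma invle a b : G a -> G b -> a <= b -> inv b <= inv a.
Proof.
move=> Ga Gb ab.
have h1 : e <= op b (inv a) by rewrite -(opV Ga); apply: opmon => //; exact: Ginv.
have := opmon (Ge) (Gop Gb (Ginv Ga)) (Ginv Gb) h1.
rewrite op0l; last exact: Ginv.
rewrite opA //; try exact: Ginv.
rewrite [op (inv a) (inv b)]opC; try exact: Ginv.
rewrite -opA //; try exact: Ginv.
by rewrite opV // op0l //; exact: Ginv.
Qed.

Lemma norm_ge x : G x -> e <= alo_norm inv x.
Proof.
move=> Gx; rewrite /alo_norm le_max.
case: (lerP e x) => //= /ltW h.
by rewrite -inve; apply: invle.
Qed.

Lemma norm_eq x : G x -> alo_norm inv x = e -> x = e.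
Proof.
move=> Gx; rewrite /alo_norm => h.
have h1 : x <= e by rewrite -h le_max lexx.
have h2 : inv x <= e by rewrite -h le_max lexx orbT.
apply/eqP; rewrite eq_le h1 /=.
by rewrite -(invK Gx) -inve; apply: invle => //; exact: Ginv.
Qed.

Lemma div_eq a b : G a -> G b -> alo_div op inv a b = e -> a = b.
Proof.
move=> Ga Gb; rewrite /alo_div => h.
have Gi := Ginv Gb.
transitivity (op (op a (inv b)) b); last by rewrite h op0l.
by rewrite opA // [op (inv b) b]opC // opV // op0.
Qed.

Lemma invM x y : G x -> G y -> inv (op x y) = op (inv x) (inv y).
Proof.
move=> Gx Gy; symmetry; apply: inv_uniq; try by apply: Gop; apply: Ginv.
  exact: Gop.
have Gix := Ginv Gx; have Giy := Ginv Gy.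
have Gp := Gop Gix Giy. rewrite (opA Gx Gy Gp) [op (inv x) (inv y)]opC // -(opA Gy Giy Gix) opV // op0l //.
by rewrite opV.
Qed.

Lemma div_inv a b : G a -> G b -> inv (alo_div op inv a b) = alo_div op inv b a.
Proof.
move=> Ga Gb; have Gia := Ginv Ga; have Gib := Ginv Gb; by rewrite /alo_div invM // invK // opC.
Qed.

Lemma norm_inv x : G x -> alo_norm inv (inv x) = alo_norm inv x.
Proof. by move=> Gx; rewrite /alo_norm invK // maxC. Qed.

Lemma opmon2 a b c d : G a -> G b -> G c -> G d -> a <= b -> c <= d ->
  op a c <= op b d.
Proof.
move=> Ga Gb Gc Gd ab cd; apply: (le_trans (opmon Ga Gb Gc ab)).
by rewrite ![op b _]opC //; apply: opmon.
Qed.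

Lemma Gnorm x : G x -> G (alo_norm inv x).
Proof. move=> Gx; rewrite /alo_norm /Num.max; case: ifP => _ //; exact: Ginv. Qed.

Lemma norm_tri x y : G x -> G y ->
  alo_norm inv (op x y) <= op (alo_norm inv x) (alo_norm inv y).
Proof.
move=> Gx Gy; rewrite /alo_norm ge_max; apply/andP; split.
  by apply: opmon2 => //; try (apply: Gnorm => //); rewrite le_max lexx.
rewrite invM //; apply: opmon2; try (apply: Gnorm => //); try exact: Ginv;
  by rewrite le_max lexx orbT.
Qed.

Lemma div_split a b c : G a -> G b -> G c ->
  alo_div op inv a b = op (alo_div op inv a c) (alo_div op inv c b).
Proof.
move=> Ga Gb Gc; have Gic := Ginv Gc; have Gib := Ginv Gb; rewrite /alo_div (opA Ga Gic (Gop Gc Gib)).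
by rewrite -(opA Gic Gc Gib) [op (inv c) c]opC // opV // op0l.
Qed.

Lemma Gdiv a b : G a -> G b -> G (alo_div op inv a b).
Proof. move=> Ga Gb; apply: Gop => //; exact: Ginv. Qed.

End S.

Theorem proposition7 (R : realType) (G : set R) (op : R -> R -> R) (e : R) (inv : R -> R) :
  real_alo_group G op e inv -> continuous_op G op -> open_interval G ->
  forall a b c : R * R, interval_G G a -> interval_G G b -> interval_G G c ->
  [/\ e <= dist_IG op inv a b,
      (dist_IG op inv a b = e <-> a = b),
      dist_IG op inv a b = dist_IG op inv b a &
      dist_IG op inv a b <= op (dist_IG op inv a c) (dist_IG op inv c b)].
Proof.
move=> H _ _ [a1 a2] [b1 b2] [c1 c2] [/= Ga1 [Ga2 _]] [/= Gb1 [Gb2 _]] [/= Gc1 [Gc2 _]].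
have Ge : G e by case: H => _ [].
have opmon : forall a b c, G a -> G b -> G c -> a <= b -> op a c <= op b c.
  by case: H => _ [_ [_ [_ [_ [_ []]]]]].
have opC : forall a b, G a -> G b -> op a b = op b a.
  by case: H => _ [_ [_ [_ []]]].
rewrite /dist_IG /=.
have n1 := norm_ge H (Gdiv H Ga1 Gb1).
have n2 := norm_ge H (Gdiv H Ga2 Gb2).
split.
- by rewrite le_max n1.
- split.
  + move=> h.
    have e1 : alo_norm inv (alo_div op inv a1 b1) = e.
      by apply/eqP; rewrite eq_le n1 andbT -h le_max lexx.
    have e2 : alo_norm inv (alo_div op inv a2 b2) = e.
      by apply/eqP; rewrite eq_le n2 andbT -h le_max lexx orbT.
    have := div_eq H Ga1 Gb1 (norm_eq H (Gdiv H Ga1 Gb1) e1).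
    have := div_eq H Ga2 Gb2 (norm_eq H (Gdiv H Ga2 Gb2) e2).
    by move=> -> ->.
  + case=> -> ->.
    have ee : forall x, G x -> alo_div op inv x x = e.
      move=> x Gx; rewrite /alo_div; case: H => _ [_ [_ [_ [_ [_ [hV _]]]]]]; exact: hV.
    by rewrite !ee // /alo_norm (inve H) !maxxx.
- by rewrite -(div_inv H Ga1 Gb1) -(div_inv H Ga2 Gb2) (norm_inv H (Gdiv H Ga1 Gb1)) (norm_inv H (Gdiv H Ga2 Gb2)).
- set A1 := alo_norm inv (alo_div op inv a1 c1).
  set A2 := alo_norm inv (alo_div op inv a2 c2).
  set B1 := alo_norm inv (alo_div op inv c1 b1).
  set B2 := alo_norm inv (alo_div op inv c2 b2).
  have GA1 : G A1 := Gnorm H (Gdiv H Ga1 Gc1).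
  have GA2 : G A2 := Gnorm H (Gdiv H Ga2 Gc2).
  have GB1 : G B1 := Gnorm H (Gdiv H Gc1 Gb1).
  have GB2 : G B2 := Gnorm H (Gdiv H Gc2 Gb2).
  have GmA : G (Num.max A1 A2) by rewrite /Num.max; case: ifP.
  have GmB : G (Num.max B1 B2) by rewrite /Num.max; case: ifP.
  rewrite ge_max; apply/andP; split.
  + rewrite (div_split H Ga1 Gb1 Gc1).
    apply: (le_trans (norm_tri H (Gdiv H Ga1 Gc1) (Gdiv H Gc1 Gb1))).
    by apply: (opmon2 H) => //; rewrite le_max lexx.
  + rewrite (div_split H Ga2 Gb2 Gc2).
    apply: (le_trans (norm_tri H (Gdiv H Ga2 Gc2) (Gdiv H Gc2 Gb2))).
    by apply: (opmon2 H) => //; rewrite le_max lexx orbT.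
Qed.
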